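(* Let $\mathfrak{u}=(U_i,u_i,u^i)_{i\in\mathbb Z}$ be a representation of $\mathcal Z$ and $\mathfrak{u}^\vee$ its dual. Then $\mathfrak{u}$ is pure (resp. nontrivial, resp. a special chain) if and only if $\mathfrak{u}^\vee$ is pure (resp. nontrivial, resp. a special chain). Moreover, $\mathfrak{u}$ is a linked chain if and only if $\mathfrak{u}^\vee$ is a colinked chain. Finally, for a subset $H\subseteq\mathbb Z$, $\mathfrak{u}$ has support $H$ if and only if $\mathfrak{u}^\vee$ has cosupport $H$.
   Context: Let $k$ be a field. $\mathcal Z$ is the quiver with vertex set $\mathbb Z$ and, for each $i\in\mathbb Z$, arrows $\alpha^i\colon i\to i+1$ and $\alpha_i\colon i+1\to i$. A representation $\mathfrak{u}=(U_i,u_i,u^i)_{i\in\mathbb Z}$ consists of finite-dimensional $k$-vector spaces $U_i$ and linear maps $u^i\colon U_i\to U_{i+1}$, $u_i\colon U_{i+1}\to U_i$. Its dual is $\mathfrak{u}^\vee=(U_i^\vee,(u^i)^\vee,(u_i)^\vee)_{i\in\mathbb Z}$, i.e. the map associated to $\alpha_i$ is $(u^i)^\vee$ and to $\alpha^i$ is $(u_i)^\vee$. Compositions: $u^i_i=\mathrm{Id}$, $u^i_j=u^{j-1}\circ\cdots\circ u^i$ for $j>i$, $u^i_j=u_j\circ\cdots\circ u_{i-1}$ for $j<i$. The representation is pure if all $U_i$ have the same dimension, nontrivial if $U_i\neq0$ for all $i$. A special chain: $u_i\circ u^i=0$ and $u^i\circ u_i=0$ for all $i$. A linked chain: special chain with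 $\ker(u_{i-1})\cap\ker(u^i)=0$ for all $i$. A colinked chain: special chain with $\mathrm{Im}(u_i)+\mathrm{Im}(u^{i-1})=U_i$ for all $i$. $H\subseteq\mathbb Z$ is a support if for each $i\in\mathbb Z$ there is $j\in H$ with $u^j_i$ surjective, and a cosupport if for each $i$ there is $j\in H$ with $u^i_j$ injective. *)

(* Defs.v *)
From HB Require Import structures.
From mathcomp Require Import all_boot all_order all_algebra.
Set Implicit Arguments. Unset Strict Implicit. Unset Printing Implicit Defensive.
Import Order.TTheory GRing.Theory Num.Theory.
Local Open Scope ring_scope.

(* A representation of the quiver Z over a field k: finite-dimensional
   k-vector spaces U i (i : int) with maps
   up i = u^i : U i -> U (i+1) and dn i = u_i : U (i+1) -> U i. *)
Record zrep (k : fieldType) := ZRep {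
  U : int -> vectType k;
  up : forall i : int, 'Hom(U i, U (i + 1));
  dn : forall i : int, 'Hom(U (i + 1), U i) }.

Section Defs.
Variable k : fieldType.

Definition dualV (V : vectType k) : vectType k := 'Hom(V, k^o).

Definition dualmap (V W : vectType k) (f : 'Hom(V, W)) : 'Hom(dualV W, dualV V) :=
  linfun (fun phi : 'Hom(W, k^o) => (phi \o f)%VF).

Definition dual_rep (r : zrep k) : zrep k :=
  @ZRep k (fun i => dualV (U r i))
       (fun i => dualmap (dn r i))
       (fun i => dualmap (up r i)).

Variable r : zrep k.

Definition castU (i j : int) (e : i = j) : 'Hom(U r i, U r j) :=
  match e in _ = j return 'Hom(U r i, U r j) with erefl => \1%VF end.

Lemma upc_eq (i : int) (n : nat) : i + n%:Z + 1 = i + n.+1%:Z.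
Proof. by rewrite -addn1 PoszD addrA. Qed.

Lemma dnc_eq (i : int) (n : nat) : i - n%:Z = i - n.+1%:Z + 1.
Proof. by rewrite -addn1 PoszD opprD addrA subrK. Qed.

Lemma zero_eq (i : int) : i = i + 0%:Z.
Proof. by rewrite addr0. Qed.

Fixpoint upc (i : int) (n : nat) : 'Hom(U r i, U r (i + n%:Z)) :=
  match n return 'Hom(U r i, U r (i + n%:Z)) with
  | 0 => castU (zero_eq i)
  | n'.+1 => (castU (upc_eq i n') \o up r (i + n'%:Z) \o upc i n')%VF
  end.

Lemma zero_eq' (i : int) : i = i - 0%:Z.
Proof. by rewrite subr0. Qed.

Fixpoint dnc (i : int) (n : nat) : 'Hom(U r i, U r (i - n%:Z)) :=
  match n return 'Hom(U r i, U r (i - n%:Z)) with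
  | 0 => castU (zero_eq' i)
  | n'.+1 => (dn r (i - n'.+1%:Z) \o castU (dnc_eq i n') \o dnc i n')%VF
  end.

Lemma comp_pos (i j : int) (n : nat) : j - i = Posz n -> i + n%:Z = j.
Proof. by move=> <-; rewrite addrC subrK. Qed.

Lemma comp_neg (i j : int) (n : nat) : j - i = Negz n -> i - n.+1%:Z = j.
Proof. by rewrite NegzE => <-; rewrite addrC subrK. Qed.

Definition ucomp (i j : int) : 'Hom(U r i, U r j) :=
  match j - i as d return j - i = d -> 'Hom(U r i, U r j) with
  | Posz n => fun e => (castU (comp_pos e) \o upc i n)%VF
  | Negz n => fun e => (castU (comp_neg e) \o dnc i n.+1)%VF
  end erefl.

Definition pure : Prop := forall i j : int, \dim {: U r i} = \dim {: U r j}.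

Definition nontrivial : Prop := forall i : int, {: U r i}%VS != 0%VS.

Definition special_chain : Prop :=
  forall i : int, (dn r i \o up r i = 0)%VF /\ (up r i \o dn r i = 0)%VF.

(* ker(u_{i-1}) ∩ ker(u^i) = 0, written with the index shifted (i := i+1) *)
Definition linked_chain : Prop :=
  special_chain /\ forall i : int, (lker (dn r i) :&: lker (up r (i + 1)))%VS = 0%VS.

(* Im(u_i) + Im(u^{i-1}) = U_i, written with the index shifted (i := i+1) *)
Definition colinked_chain : Prop :=
  special_chain /\ forall i : int, (limg (dn r (i + 1)) + limg (up r i))%VS = fullv.

Definition is_support (H : int -> Prop) : Prop :=
  forall i : int, exists j : int, H j /\ limg (ucomp j i) = fullv.

Definition is_cosupport (H : int -> Prop) : Prop :=
  forall i : int, exists j : int, H j /\ lker (ucomp i j) = 0%VS.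

End Defs.

(* Main.v *)
Require Import Defs.
From HB Require Import structures.
From mathcomp Require Import all_boot all_order all_algebra.
From mathcomp Require Import zify.
Set Implicit Arguments. Unset Strict Implicit. Unset Printing Implicit Defensive.
Import Order.TTheory GRing.Theory Num.Theory.

Section Duality.
Local Open Scope ring_scope.
Variable k : fieldType.

Definition cf (V : vectType k) n (X : n.-tuple V) (j : 'I_n) : V -> k^o := coord X j.
Fact cf_lin (V : vectType k) n (X : n.-tuple V) j : linear (cf X j).
Proof. by move=> a x y; rewrite /cf linearP. Qed.
HB.instance Definition _ (V : vectType k) n (X : n.-tuple V) j :=
  GRing.isSemilinear.Build k V k^o _ (cf X j) (GRing.semilinear_linear (cf_lin X j)).

Lemma dimdual (V : vectType k) : \dim {: dualV V} = \dim {: V}.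
Proof. rewrite !dimvf /dualV; change (dim V * 1 = dim V)%N; exact: muln1. Qed.

Definition precomp (V W : vectType k) (f : 'Hom(V, W)) (phi : 'Hom(W, k^o)) :
  'Hom(V, k^o) := (phi \o f)%VF.
Fact precomp_lin (V W : vectType k) (f : 'Hom(V, W)) : linear (precomp f).
Proof. by move=> a x y; rewrite /precomp comp_lfunDl comp_lfunZl. Qed.
HB.instance Definition _ (V W : vectType k) (f : 'Hom(V, W)) :=
  GRing.isSemilinear.Build k _ _ _ (precomp f) (GRing.semilinear_linear (precomp_lin f)).

Lemma dualmapE (V W : vectType k) (f : 'Hom(V, W)) (phi : 'Hom(W, k^o)) :
  dualmap f phi = (phi \o f)%VF.
Proof. change (linfun (precomp f) phi = precomp f phi); by rewrite lfunE. Qed.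

Lemma dual_expand (V : vectType k) (phi : 'Hom(V, k^o)) :
  phi = \sum_(j < \dim {: V}) phi (vbasis fullv)`_j *: linfun (cf (vbasis fullv) j).
Proof.
apply/lfunP => x; rewrite sum_lfunE {1}(coord_vbasis (memvf x)) linear_sum /=.
apply: eq_bigr => j _; rewrite linearZ /= scale_lfunE lfunE /= /cf.
by rewrite /GRing.scale /= mulrC.
Qed.

Lemma sep0 (V : vectType k) (v : V) : v != 0 -> exists phi : 'Hom(V, k^o), phi v != 0.
Proof.
move=> nz.
case: (pickP (fun j : 'I_(\dim {: V}) => coord (vbasis fullv) j v != 0)) => [j Hj | H].
  by exists (linfun (cf (vbasis fullv) j)); rewrite lfunE.
case/negP: nz; apply/eqP; rewrite (coord_vbasis (memvf v)) big1 // => j _.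
by move/negbFE/eqP: (H j) => ->; rewrite scale0r.
Qed.

Lemma sep (V : vectType k) (S : {vspace V}) (v : V) : v \notin S ->
  exists phi : 'Hom(V, k^o), (S <= lker phi)%VS /\ phi v != 0.
Proof.
move=> vS.
have nz : v - projv S v != 0.
  apply: contra vS; rewrite subr_eq0 => /eqP ->; exact: memv_proj.
have [phi0 Hphi0] := sep0 nz.
exists (phi0 \o (\1 - projv S))%VF; split.
  apply/subvP => s Hs; rewrite memv_ker comp_lfunE add_lfunE opp_lfunE id_lfunE.
  by rewrite projv_id // subrr linear0.
by rewrite comp_lfunE add_lfunE opp_lfunE id_lfunE.
Qed.

Lemma dd (V : vectType k) (Psi : 'Hom(dualV V, k^o)) :
  exists v : V, forall phi : 'Hom(V, k^o), Psi phi = phi v.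
Proof.
exists (\sum_(j < \dim {: V}) (Psi (linfun (cf (vbasis fullv) j)) : k) *: ((vbasis (fullv : {vspace V}))`_j : V)).
move=> phi; rewrite {1}(dual_expand phi) !linear_sum; apply: eq_bigr => j _.
rewrite !linearZ /= /GRing.scale /= [in LHS]mulrC; reflexivity.
Qed.

Lemma dualmap_comp (V W X : vectType k) (f : 'Hom(W, X)) (g : 'Hom(V, W)) :
  dualmap (f \o g)%VF = (dualmap g \o dualmap f)%VF.
Proof.
apply/lfunP => phi; rewrite comp_lfunE !dualmapE; apply/lfunP => x.
by rewrite !comp_lfunE.
Qed.

Lemma dualmap1 (V : vectType k) : dualmap (\1%VF : 'End(V)) = \1%VF.
Proof.
apply/lfunP => phi; rewrite dualmapE id_lfunE; apply/lfunP => x.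
by rewrite comp_lfunE id_lfunE.
Qed.

Lemma dualmap0 (V W : vectType k) : dualmap (0 : 'Hom(V, W)) = 0.
Proof.
apply/lfunP => phi; rewrite dualmapE zero_lfunE; apply/lfunP => x.
by rewrite comp_lfunE !zero_lfunE linear0.
Qed.

Lemma zero_dual (V W : vectType k) (f : 'Hom(V, W)) : f = 0 <-> dualmap f = 0.
Proof.
split=> [->|H]; first exact: dualmap0.
apply/lfunP => v; rewrite zero_lfunE; apply/eqP; apply/negPn/negP => nz.
have [phi Hphi] := sep0 nz.
have := f_equal (fun g : 'Hom(dualV W, dualV V) => g phi v) H.
by rewrite dualmapE comp_lfunE !zero_lfunE => E; rewrite E eqxx in Hphi.
Qed.

Lemma surj_dual (V W : vectType k) (f : 'Hom(V, W)) :
  limg f = fullv <-> lker (dualmap f) = 0%VS.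
Proof.
split=> [Hf|Hf].
  apply/eqP; rewrite -subv0; apply/subvP => phi; rewrite memv_ker memv0 dualmapE => /eqP H.
  apply/eqP/lfunP => w; rewrite zero_lfunE.
  have : w \in limg f by rewrite Hf memvf.
  case/memv_imgP => v _ ->.
  by rewrite -comp_lfunE H zero_lfunE.
apply/eqP; rewrite eqEsubv subvf /=; apply/subvP => x _.
apply/negPn/negP => nx; have [phi [Hs Hx]] := sep nx.
have Z : dualmap f phi = 0.
  rewrite dualmapE; apply/lfunP => v; rewrite comp_lfunE zero_lfunE.
  by apply/eqP; rewrite -memv_ker; apply: (subvP Hs); apply: memv_img; exact: memvf.
have : phi \in lker (dualmap f) by rewrite memv_ker Z.
rewrite Hf memv0 => /eqP E; by rewrite E zero_lfunE eqxx in Hx.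
Qed.

Lemma link_dual (V W1 W2 : vectType k) (f : 'Hom(V, W1)) (g : 'Hom(V, W2)) :
  (lker f :&: lker g)%VS = 0%VS <-> (limg (dualmap g) + limg (dualmap f))%VS = fullv.
Proof.
split=> [H|H].
  apply/eqP; rewrite eqEsubv subvf /=; apply/subvP => x _.
  apply/negPn/negP => nx; have [Psi [HM Hx]] := sep nx.
  have [v Hv] := dd Psi.
  have vanf : forall a : 'Hom(W1, k^o), a (f v) = 0.
    move=> a; rewrite -(comp_lfunE a f) -dualmapE -(Hv (dualmap f a)).
    apply/eqP; rewrite -memv_ker.
    apply: (subvP HM); apply: (subvP (addvSr _ _)); apply: memv_img; exact: memvf.
  have vang : forall a : 'Hom(W2, k^o), a (g v) = 0.
    move=> a; rewrite -(comp_lfunE a g) -dualmapE -(Hv (dualmap g a)).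
    apply/eqP; rewrite -memv_ker.
    apply: (subvP HM); apply: (subvP (addvSl _ _)); apply: memv_img; exact: memvf.
  have fv : f v = 0.
    apply/eqP; apply/negPn/negP => nz; have [a Ha] := sep0 nz.
    by rewrite vanf eqxx in Ha.
  have gv : g v = 0.
    apply/eqP; apply/negPn/negP => nz; have [a Ha] := sep0 nz.
    by rewrite vang eqxx in Ha.
  have : v \in (lker f :&: lker g)%VS by rewrite memv_cap !memv_ker fv gv !eqxx.
  rewrite H memv0 => /eqP v0.
  by move: Hx; rewrite Hv v0 linear0 eqxx.
apply/eqP; rewrite -subv0; apply/subvP => v.
rewrite memv_cap !memv_ker memv0 => /andP[/eqP fv /eqP gv].
apply/negPn/negP => nz; have [phi Hphi] := sep0 nz.
have : phi \in (limg (dualmap g) + limg (dualmap f))%VS by rewrite H memvf.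
case/memv_addP => a /memv_imgP[a' _ ->] [b /memv_imgP[b' _ ->] E].
move: Hphi; rewrite E add_lfunE !dualmapE !comp_lfunE gv fv !linear0 addr0 eqxx.
by [].
Qed.
End Duality.

Section Comp.
Local Open Scope ring_scope.
Variable k : fieldType.
Variable r : zrep k.

Lemma castU_id i (e : i = i) : castU r e = \1%VF.
Proof. by rewrite (eq_irrelevance e erefl). Qed.

Lemma castU_irr i j (e e' : i = j) : castU r e = castU r e'.
Proof. by rewrite (eq_irrelevance e e'). Qed.

Lemma castU_comp i j l (e1 : i = j) (e2 : j = l) :
  (castU r e2 \o castU r e1)%VF = castU r (etrans e1 e2).
Proof. case: j / e1 e2 => e2; case: l / e2; by rewrite !castU_id comp_lfun1l. Qed.

Lemma up_nat a b (e : a = b) (e' : a + 1 = b + 1) :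
  (castU r e' \o up r a)%VF = (up r b \o castU r e)%VF.
Proof. case: b / e e' => e'; by rewrite !castU_id comp_lfun1l comp_lfun1r. Qed.

Lemma dn_nat a b (e : a = b) (e' : a + 1 = b + 1) :
  (castU r e \o dn r a)%VF = (dn r b \o castU r e')%VF.
Proof. case: b / e e' => e'; by rewrite !castU_id comp_lfun1l comp_lfun1r. Qed.

Lemma ucomp_gen i j d (e : j - i = d) : ucomp r i j =
  (match d as d0 return j - i = d0 -> 'Hom(U r i, U r j) with
  | Posz n => fun e => (castU r (comp_pos e) \o upc r i n)%VF
  | Negz n => fun e => (castU r (comp_neg e) \o dnc r i n.+1)%VF end) e.
Proof. by case: d / e. Qed.

Lemma ucomp_up i j n (e : i + n%:Z = j) : ucomp r i j = (castU r e \o upc r i n)%VF.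
Proof.
have e1 : j - i = Posz n by rewrite -e addrAC subrr add0r.
by rewrite (ucomp_gen e1) (castU_irr (comp_pos e1) e).
Qed.

Lemma ucomp_dn i j n (e : i - n%:Z = j) : ucomp r i j = (castU r e \o dnc r i n)%VF.
Proof.
case: n e => [|n] e.
  have e1 : j - i = Posz 0 by rewrite -e subr0 subrr.
  rewrite (ucomp_gen e1) /= !castU_comp; exact: castU_irr.
have e1 : j - i = Negz n by rewrite -e NegzE addrAC subrr add0r.
by rewrite (ucomp_gen e1) (castU_irr (comp_neg e1) e).
Qed.

Lemma ucomp_id i : ucomp r i i = \1%VF.
Proof. by rewrite (ucomp_up (esym (zero_eq i))) /= castU_comp castU_id. Qed.

Lemma ucomp_S i j : i <= j -> ucomp r i (j + 1) = (up r j \o ucomp r i j)%VF.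
Proof.
move=> h; case E: (j - i) => [n|n]; last first.
  by move: h; rewrite -subr_ge0 E.
have e := comp_pos E.
have e1 : i + n.+1%:Z = j + 1 by rewrite -upc_eq e.
rewrite (ucomp_up e) (ucomp_up e1) /= !comp_lfunA castU_comp.
by rewrite (up_nat e).
Qed.

Lemma ucomp_P i j : j + 1 <= i -> ucomp r i j = (dn r j \o ucomp r i (j + 1))%VF.
Proof.
move=> h; case E: (j - i) => [n|n].
  by move: h E; lia.
have e := comp_neg E.
have e1 : i - n%:Z = j + 1 by rewrite dnc_eq e.
rewrite (ucomp_dn e) (ucomp_dn e1) /= !comp_lfunA.
have e' : i - n.+1%:Z + 1 = j + 1 by rewrite e.
rewrite (dn_nat e e'); congr (_ \o _)%VF; rewrite -comp_lfunA castU_comp (castU_irr _ e1).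
by [].
Qed.
End Comp.

Section Ind.
Local Open Scope ring_scope.

Lemma int_up (P : int -> Prop) (a : int) : P a ->
  (forall b, a <= b -> P b -> P (b + 1)) -> forall b, a <= b -> P b.
Proof.
move=> Pa IH b hb; case E: (b - a) => [n|n]; last by move: hb E; lia.
rewrite -(comp_pos E); elim: n {E} => [|n IHn]; first by rewrite addr0.
rewrite -upc_eq; apply: IH => //; lia.
Qed.

Lemma int_dn (P : int -> Prop) (a : int) : P a ->
  (forall b, b + 1 <= a -> P (b + 1) -> P b) -> forall b, b <= a -> P b.
Proof.
move=> Pa IH b hb; case E: (a - b) => [n|n]; last by move: hb E; lia.
have -> : b = a - n%:Z by move: E; lia.
elim: n {E} => [|n IHn]; first by rewrite subr0.
apply: IH; first lia.
by rewrite -dnc_eq.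
Qed.
End Ind.

Section Comp2.
Local Open Scope ring_scope.
Variable k : fieldType.
Variable r : zrep k.

Lemma ucomp_first_up j i : j + 1 <= i -> ucomp r j i = (ucomp r (j + 1) i \o up r j)%VF.
Proof.
move: i; apply: int_up.
  by rewrite ucomp_S // ucomp_id ucomp_id comp_lfun1r comp_lfun1l.
move=> b hb IH; rewrite ucomp_S; last lia.
by rewrite IH ucomp_S // comp_lfunA.
Qed.

Lemma ucomp_first_dn j i : j <= i -> ucomp r (i + 1) j = (ucomp r i j \o dn r i)%VF.
Proof.
move: j; apply: int_dn.
  by rewrite ucomp_P // ucomp_id ucomp_id comp_lfun1r comp_lfun1l.
move=> b hb IH; rewrite ucomp_P; last lia.
by rewrite IH (ucomp_P r hb) comp_lfunA.
Qed.
End Comp2.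

Lemma ucomp_dual (k : fieldType) (u : zrep k) i j :
  ucomp (dual_rep u) i j = dualmap (ucomp u j i).
Proof.
case: (lerP i j) => [h|/ltW h].
  move: j h; apply: int_up.
    by rewrite !ucomp_id dualmap1.
  move=> b hb IH; rewrite ucomp_S // IH /= ucomp_first_dn // dualmap_comp.
  by [].
move: j h; apply: int_dn.
  by rewrite !ucomp_id dualmap1.
move=> b hb IH; rewrite ucomp_P // IH /= (ucomp_first_up u hb) dualmap_comp.
by [].
Qed.

Theorem proposition2p5 (k : fieldType) (u : zrep k) :
  (pure u <-> pure (dual_rep u)) /\
  (nontrivial u <-> nontrivial (dual_rep u)) /\
  (special_chain u <-> special_chain (dual_rep u)) /\
  (linked_chain u <-> colinked_chain (dual_rep u)) /\
  (forall H : int -> Prop, is_support u H <-> is_cosupport (dual_rep u) H).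
Proof.
have SC : special_chain u <-> special_chain (dual_rep u).
  split=> H i; have [H1 H2] := H i; split.
  - by rewrite /= -dualmap_comp H1 dualmap0.
  - by rewrite /= -dualmap_comp H2 dualmap0.
  - by apply/zero_dual; rewrite dualmap_comp.
  - by apply/zero_dual; rewrite dualmap_comp.
split.
  split=> H i j.
    by rewrite /= !dimdual.
  by have := H i j; rewrite /= !dimdual.
split.
  split=> H i.
    by rewrite /= -dimv_eq0 dimdual dimv_eq0.
  by have := H i; rewrite /= -dimv_eq0 dimdual dimv_eq0.
split; first exact: SC.
split.
  split=> [[Hs Hl]|[Hs Hl]]; split.
  - by apply/SC.
  - by move=> i; rewrite /=; apply/link_dual.
  - by apply/SC.
  - by move=> i; apply/link_dual; exact: (Hl i).
move=> H; split=> Hs i; have [j [Hj Hi]] := Hs i; exists j; split => //.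
  by rewrite ucomp_dual; apply/surj_dual.
by apply/surj_dual; rewrite -ucomp_dual.
Qed.
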